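(* Let $\Sigma$ be an alphabet with $|\Sigma|\geq 3$, let $\#\notin\Sigma$, and let $T,T'$ be strings over $\Sigma\cup\{\#\}$ with $d_H(T,T')=1$, where the differing position $i\in[0,|T|)$ satisfies $T[i]\neq T'[i]=\#$. Let $P$ be a periodic string of length $m$ such that $|\mathsf{occ}_T(P)|-|\mathsf{occ}_{T'}(P)|=y>0$, and suppose $\#$ occurs exactly once in $T'[i-m+1\mathinner{.\,.}i+m-1]$. Then there is a letter $c\in\Sigma$ such that the string $T''$ obtained from $T'$ by replacing $T'[i]$ with $c$ satisfies $|\mathsf{occ}_{T''}(P)|\leq|\mathsf{occ}_{T'}(P)|$.
   Context: $\mathsf{occ}_T(P)$ is the set of starting positions of occurrences of $P$ in $T$; $d_H$ is the Hamming distance. An integer $p>0$ is a period of $P$ if $P[t]=P[t+p]$ for all $t\in[0,|P|-p)$; $\mathsf{per}(P)$ is the smallest period; $P$ is periodic if $\mathsf{per}(P)\leq|P|/2$. The fragment $T'[i-m+1\mathinner{.\,.}i+m-1]$ is understood as clipped to the positions of $T'$. *)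

(* Defs.v *)
(* Strings over Sigma ∪ {#} are seq (option Sigma), with # = None. *)
From mathcomp Require Import all_boot.
Set Implicit Arguments. Unset Strict Implicit. Unset Printing Implicit Defensive.

Section Strings.
Variable S : finType.
Notation str := (seq (option S)).

Definition at_ (X : str) (t : nat) : option S := nth None X t.

Definition dH (X Y : str) : nat :=
  count (fun t => at_ X t != at_ Y t) (iota 0 (maxn (size X) (size Y))).

Definition occ (X P : str) : seq nat :=
  [seq j <- iota 0 (size X).+1 |
     (j + size P <= size X) && (take (size P) (drop j X) == P)].

Definition is_period (P : str) (p : nat) : bool :=
  (0 < p) && all (fun t => at_ P t == at_ P (t + p)) (iota 0 (size P - p)).

Lemma exists_period (P : str) : exists p, is_period P p.
Proof.
exists (size P).+1; rewrite /is_period /=.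
by have -> : size P - (size P).+1 = 0 by apply/eqP; rewrite subn_eq0 leqnSn.
Qed.

Definition per (P : str) : nat := ex_minn (exists_period P).

Definition periodic (P : str) : bool := per P <= (size P)./2.

(* clipped fragment X[i-m+1 .. i+m-1] *)
Definition window (X : str) (i m : nat) : str :=
  drop (i.+1 - m) (take (i + m) X).

End Strings.

(* Main.v *)
Require Import Defs.
From mathcomp Require Import all_boot.
From mathcomp Require Import zify.

Lemma occ_nth (S : finType) (X P : seq (option S)) j :
  (j + size P <= size X) && (take (size P) (drop j X) == P) ->
  forall t, t < size P -> nth None X (j + t) = nth None P t.
Proof.
move=> /andP [_ /eqP e] t ht.
have := congr1 (fun s => nth None s t) e.
by rewrite /= nth_take // nth_drop.
Qed.

Lemma nth_occ (S : finType) (X P : seq (option S)) j :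
  j + size P <= size X ->
  (forall t, t < size P -> nth None X (j + t) = nth None P t) ->
  (j + size P <= size X) && (take (size P) (drop j X) == P).
Proof.
move=> hs h; rewrite hs /=; apply/eqP.
apply: (eq_from_nth (x0 := None)).
  have hs' : size P <= size (drop j X) by rewrite size_drop (leq_subRL _ (leq_trans (leq_addr _ _) hs)).
  by rewrite size_takel.
have hs' : size P <= size (drop j X) by rewrite size_drop (leq_subRL _ (leq_trans (leq_addr _ _) hs)).
move=> t; rewrite size_takel //.
by move=> ht; rewrite nth_take // nth_drop h.
Qed.

Lemma pick_letter (S : finType) (a1 a2 : option S) :
  3 <= #|S| -> exists c : S, (Some c != a1) && (Some c != a2).
Proof.
move=> hS.
have [x0 _] : exists x0 : S, true.
  case: (pickP (@predT S)) => [x _|h]; first by exists x.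
  by move: hS; rewrite (eq_card0 h).
case: (boolP [exists x, (Some x != a1) && (Some x != a2)]) => [/existsP//|/existsPn H]; exfalso.
have : #|S| <= #|[set odflt x0 a1; odflt x0 a2]|.
  rewrite -cardsT; apply: subset_leq_card; apply/subsetP => x _.
  have := H x; rewrite negb_and !negbK => /orP [] /eqP <-;
  by rewrite !inE eqxx ?orbT.
rewrite cards2; case: (_ != _); lia.
Qed.

Theorem lemma10 (S : finType) (T T' P : seq (option S)) (i : nat) :
  3 <= #|S| ->
  size T = size T' ->
  dH T T' = 1 ->
  i < size T ->
  at_ T i != at_ T' i ->
  at_ T' i = None ->
  periodic P ->
  size (occ T' P) < size (occ T P) ->
  count (pred1 None) (window T' i (size P)) = 1 ->
  exists c : S,
    size (occ (set_nth None T' i (Some c)) P) <= size (occ T' P).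
Proof.
move=> hS hsz _ hi _ _ hper _ _.
set p := per P.
have [hp0 hpP] : 0 < p /\ forall t, t + p < size P -> nth None P t = nth None P (t + p).
  rewrite /p /per; case: ex_minnP => q /andP [q0 /allP hq] _; split => // t ht.
  by apply/eqP; apply: hq; rewrite mem_iota; lia.
have hp2 : p.*2 <= size P.
  by move: hper; rewrite /periodic -/p geq_half_double.
have [c /andP [hc1 hc2]] := @pick_letter S (at_ T' (i - p)) (at_ T' (i + p)) hS.
exists c.
set T'' := set_nth None T' i (Some c).
have hsz'' : size T'' = size T' by rewrite size_set_nth; lia.
rewrite /occ !size_filter hsz''.
apply: sub_count => j /= hj.
have hj' : (j + size P <= size T'') && (take (size P) (drop j T'') == P) by rewrite hsz''.
have hn := @occ_nth _ T'' P j hj'.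
have hjs : j + size P <= size T' by case/andP: hj.
have nT : forall k, k != i -> nth None T'' k = nth None T' k.
  by move=> k hk; rewrite /T'' nth_set_nth /= (negbTE hk).
case: (leqP j i) => hji; last first.
  apply: nth_occ => // t ht; rewrite -hn // nT //; lia.
case: (ltnP i (j + size P)) => hij; last first.
  by apply: nth_occ => // t ht; rewrite -hn // nT //; apply/negP => /eqP e; move: hij; rewrite -e leq_add2l leqNgt ht.
exfalso.
set k := i - j.
have kE : i = j + k by rewrite /k subnKC.
clearbody k.
have hk : nth None P k = Some c.
  by rewrite -hn; [rewrite /T'' nth_set_nth /= -kE eqxx | lia].
case: (ltnP (k + p) (size P)) => hkp.
  move: hc2; rewrite /at_ -hk hpP // -hn // -nT; last by lia.
  by rewrite addnA -kE eqxx.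
have hkp' : p <= k by move: hp2; rewrite -addnn; lia.
move: hc1; rewrite /at_ -hk.
have -> : k = (k - p) + p by rewrite subnK.
rewrite -hpP; last by rewrite subnK //; move: hkp hij hkp'; rewrite kE; lia.
rewrite -hn; last by lia.
rewrite -nT; last by lia.
have -> : j + (k - p) = i - p by lia.
by rewrite eqxx.
Qed.
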